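(* Let $G$ be a graph on vertex set $V=\{1,\ldots,n\}$ and let $G_l$ be a graph on $V$ with $E(G)\subseteq E(G_l)$. Suppose $A\in\mathcal{S}(G)$, $X\in\overline{\mathcal{S}_0}(G_l^c)$, and $AX-XA=0$. If for some pairwise distinct vertices $i,j,k$ with $k\in N_G[i]$ the pair $\{i,j\}$ is focused on $\{k\}$ with respect to $G$ and $G_l$, then $X\in\overline{\mathcal{S}_0}(G_{l+1}^c)$, where $G_{l+1}=G_l+\{j,k\}$ is obtained from $G_l$ by adding the edge $\{j,k\}$.
   Context: All graphs are finite, simple, undirected. For a graph $G$ on $\{1,\ldots,n\}$, $\mathcal{S}(G)$ is the set of real symmetric $n\times n$ matrices $A=(a_{ij})$ with $a_{ij}\neq0$ iff $\{i,j\}\in E(G)$ for $i\neq j$ (diagonal arbitrary). For a graph $H$ on $\{1,\ldots,n\}$, $\overline{\mathcal{S}_0}(H)$ is the set of real symmetric $n\times n$ matrices whose $(i,j)$ entry is zero whenever $i=j$ or $\{i,j\}\notin E(H)$; thus $X\in\overline{\mathcal{S}_0}(G_l^c)$ means $X$ is real symmetric with zero diagonal and $x_{ij}=0$ whenever $\{i,j\}\in E(G_l)$ ($G_l^c$ is the complement). $N_G[v]$ is the closed neighbourhood of $v$ in $G$ (vertices at distance at most 1 from $v$), and $N_G[v]^c$ denotes its complement in the vertex set. For a nonempty $U\subseteq V$, a pair $\{i,j\}$ is focused on $U$ with respect to $G$ and $G_l$ if $N_G[i]\cap N_{G_l}[j]^c\subseteq U$ and $N_G[j]\cap N_{G_l}[i]^c\subseteq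 U$. *)

(* Defs.v *)
From HB Require Import structures.
From mathcomp Require Import all_boot all_order all_algebra.
Set Implicit Arguments. Unset Strict Implicit. Unset Printing Implicit Defensive.
Import Order.TTheory GRing.Theory Num.Theory.
Local Open Scope ring_scope.

Definition simple_graph (n : nat) (G : rel 'I_n) : Prop :=
  symmetric G /\ irreflexive G.

Definition subgraph_edges (n : nat) (G H : rel 'I_n) : Prop :=
  forall i j, G i j -> H i j.

Definition compl_graph (n : nat) (G : rel 'I_n) : rel 'I_n :=
  fun i j => (i != j) && ~~ G i j.

Definition add_edge (n : nat) (G : rel 'I_n) (a b : 'I_n) : rel 'I_n :=
  fun i j => [|| G i j, (i == a) && (j == b) | (i == b) && (j == a)].

Definition cnbhd (n : nat) (G : rel 'I_n) (v : 'I_n) : {set 'I_n} :=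
  [set u | (u == v) || G v u].

Definition S_mat (R : realFieldType) (n : nat) (G : rel 'I_n)
    (A : 'M[R]_n) : Prop :=
  A^T = A /\ forall i j, i != j -> (A i j != 0) = G i j.

Definition S0bar_mat (R : realFieldType) (n : nat) (H : rel 'I_n)
    (X : 'M[R]_n) : Prop :=
  X^T = X /\ forall i j, (i == j) || ~~ H i j -> X i j = 0.

Definition focused (n : nat) (G Gl : rel 'I_n) (U : {set 'I_n}) (i j : 'I_n)
    : Prop :=
  (cnbhd G i :&: ~: cnbhd Gl j) \subset U /\
  (cnbhd G j :&: ~: cnbhd Gl i) \subset U.

(* Main.v *)
Require Import Defs.
From HB Require Import structures.
From mathcomp Require Import all_boot all_order all_algebra.
Import Order.TTheory GRing.Theory Num.Theory.
Local Open Scope ring_scope.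

Theorem lemma3p3 (R : realFieldType) (n : nat) (G Gl : rel 'I_n)
  (HG : simple_graph G) (HGl : simple_graph Gl)
  (Hsub : subgraph_edges G Gl)
  (A X : 'M[R]_n)
  (HA : S_mat G A) (HX : S0bar_mat (compl_graph Gl) X)
  (Hcomm : A *m X - X *m A = 0)
  (i j k : 'I_n)
  (Hij : i != j) (Hik : i != k) (Hjk : j != k)
  (Hk : k \in cnbhd G i)
  (Hfoc : focused G Gl [set k] i j) :
  S0bar_mat (compl_graph (add_edge Gl j k)) X.
Proof.
case: HG => [sG iG]; case: HGl => [sGl iGl].
case: HA => [tA HA]; case: HX => [tX HX].
case: Hfoc => [F1 F2].
have X0 : forall p q, (p == q) || Gl p q -> X p q = 0.
  move=> p q H; apply: HX; rewrite /compl_graph negb_and negbK.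
  by case/orP: H => ->; rewrite ?orbT.
have A0 : forall p q, p != q -> ~~ G p q -> A p q = 0.
  by move=> p q pq Gpq; apply/eqP; rewrite -[_ == 0]negbK HA // (negbTE Gpq).
have Gik : G i k by move: Hk; rewrite /cnbhd inE eq_sym (negbTE Hik).
have Xik : X i k = 0 by apply: X0; rewrite (Hsub _ _ Gik) orbT.
have Aik : A i k != 0 by rewrite HA.
have Xsym : forall p q, X p q = X q p.
  by move=> p q; rewrite -{1}tX mxE.
have Xkj : X k j = 0.
  have := congr1 (fun M : 'M[R]_n => M i j) Hcomm; rewrite !mxE.
  rewrite (bigD1 k) //= big1; last first.
    move=> l lk.
    case: (boolP (l \in cnbhd G i)) => Hl.
      have : l \notin ~: cnbhd Gl j.
        apply/negP => Hl2; move/subsetP: F1 => /(_ l).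
        by rewrite inE Hl Hl2 inE (negbTE lk) => /(_ isT).
      rewrite inE negbK /cnbhd inE => /orP [/eqP -> | H].
        by rewrite (X0 j j) ?eqxx ?mulr0.
      by rewrite (X0 l j) ?mulr0 // sGl H orbT.
    move: Hl; rewrite /cnbhd inE negb_or => /andP [li Gil].
    by rewrite A0 ?mul0r // eq_sym.
  rewrite (bigD1 k) //= [Y in X i k * A k j + Y]big1; last first.
    move=> l lk.
    case: (boolP (l \in cnbhd G j)) => Hl.
      have : l \notin ~: cnbhd Gl i.
        apply/negP => Hl2; move/subsetP: F2 => /(_ l).
        by rewrite inE Hl Hl2 inE (negbTE lk) => /(_ isT).
      rewrite inE negbK /cnbhd inE => /orP [/eqP -> | H].
        by rewrite (X0 i i) ?eqxx ?mul0r.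
      by rewrite (X0 i l) ?mul0r // H orbT.
    move: Hl; rewrite /cnbhd inE negb_or => /andP [lj Gjl].
    by rewrite (A0 l j) ?mulr0 // sG.
  rewrite Xik mul0r !addr0 subr0 => /eqP; rewrite mulf_eq0 (negbTE Aik) /=.
  by move/eqP.
split=> // p q; rewrite /compl_graph negb_and /add_edge !negbK.
have [->|pq] := eqVneq p q; first by rewrite X0 ?eqxx.
rewrite /=.
have [Gpq|nGpq] := boolP (Gl p q); first by rewrite X0 // Gpq orbT.
rewrite /=.
case: (boolP ((p == j) && (q == k))) => [H1 _|_ /= H2].
  move/andP: H1 => [H3 H4]; rewrite (eqP H3) (eqP H4).
  by rewrite Xsym.
move/andP: H2 => [H3 H4]; rewrite (eqP H3) (eqP H4).
by [].
Qed.
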